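(* Consider attribution mechanisms $M$ that map every finite reported cooperative game $([m],v)$ (with $v(\emptyset)=0$) to a payment vector $M(v)=(p_1,\ldots,p_m)\in\mathbb{R}^m$. Within the class of all finite monotone data-value games, no attribution mechanism can satisfy both of the following properties: (1) Exact reported-game Shapley fairness: for every submitted game $([m],v)$ and every submitted identity $j\in[m]$, $p_j=\mathrm{Sh}_j(v)$, the Shapley value of $j$ in $v$. (2) Unrestricted false-name-proofness: no latent provider can increase its total payment (the sum of payments to all identities it controls) by replacing one honest identity with finitely many submitted identities. Moreover, the conflict holds even when all value functions in question are monotone and take values in $\{0,1\}$.
   Context: Setting: latent data providers submit datasets under identities; the reported game on the set of submitted identities $[m]$ is $v(T)=U(A(\biguplus_{j\in T}S_j))-U(A(\emptyset))$ for a learner $A$ and utility $U$, so $v(\emptyset)=0$. A game is monotone if $T\subseteq T'$ implies $v(T)\le v(T')$. A false-name split by a latent provider $i$ replaces the single identity $i$ by $k\ge 2$ submitted identities $i^1,\dots,i^k$ whose datasets jointly make up $i$'s data; the reported game is then a game on the new identity set, which in the class considered may be any finite monotone game (e.g., a split of player $A$ of the two-player unanimity game $v(\{A,B\})=1$, $v=0$ otherwise, may yield the three-player unanimity game $v'(T)=\mathbf{1}\{\{A_1,A_2,B\}\subseteq T\}$). The latent provider's payment after the split is the sum of the payments to its pseudonyms. The Shapley value is $\mathrm{Sh}_j(v)=\sum_{T\subseteq[m]\setminus\{j\}}\frac{|T|!(m-|T|-1)!}{m!}\,(v(T\cup\{j\})-v(T))$. *)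

(* Defs.v *)
From mathcomp Require Import all_boot all_order all_algebra.
Set Implicit Arguments. Unset Strict Implicit. Unset Printing Implicit Defensive.
Import Order.TTheory GRing.Theory Num.Theory.
Local Open Scope ring_scope.

Definition game (R : realFieldType) (m : nat) := {set 'I_m} -> R.

Definition mechanism (R : realFieldType) := forall m : nat, game R m -> 'I_m -> R.

Definition zero_normalized (R : realFieldType) m (v : game R m) : Prop :=
  v set0 = 0.

Definition monotone_game (R : realFieldType) m (v : game R m) : Prop :=
  forall S T : {set 'I_m}, S \subset T -> v S <= v T.

Definition binary_game (R : realFieldType) m (v : game R m) : Prop :=
  forall S : {set 'I_m}, v S = 0 \/ v S = 1.

Definition mono01_game (R : realFieldType) m (v : game R m) : Prop :=
  [/\ zero_normalized v, monotone_game v & binary_game v].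

Definition shapley (R : realFieldType) m (v : game R m) (j : 'I_m) : R :=
  \sum_(T : {set 'I_m} | j \notin T)
     ((#|T|`! * (m - #|T| - 1)`!)%:R / (m`!)%:R) * (v (j |: T) - v T).

Definition shapley_fair (R : realFieldType) (M : mechanism R) : Prop :=
  forall m (v : game R m), mono01_game v ->
    forall j : 'I_m, M m v j = shapley v j.

(* A false-name split of latent identity i of the game v on [m] into the game
   v' on [m']: phi sends every submitted identity of [m'] to the latent
   identity controlling it; every j <> i keeps exactly one identity, i gets
   k >= 2 pseudonyms, and coalitions made of whole providers have the same
   value as before (the pseudonyms' datasets jointly make up i's data). *)
Definition false_name_split (R : realFieldType) m (v : game R m) (i : 'I_m)
    m' (phi : 'I_m' -> 'I_m) (v' : game R m') : Prop :=
  [/\ forall j : 'I_m, j != i -> #|[set j' | phi j' == j]| = 1,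
      (2 <= #|[set j' | phi j' == i]|)%N
    & forall T : {set 'I_m}, v' (phi @^-1: T) = v T].

Definition false_name_proof (R : realFieldType) (M : mechanism R) : Prop :=
  forall m (v : game R m) (i : 'I_m) m' (phi : 'I_m' -> 'I_m) (v' : game R m'),
    mono01_game v -> mono01_game v' -> false_name_split v i phi v' ->
    \sum_(j' : 'I_m' | phi j' == i) M m' v' j' <= M m v i.

(* Main.v *)
Require Import Defs.
From mathcomp Require Import all_boot all_order all_algebra.
From mathcomp Require Import ring lra.
Set Implicit Arguments. Unset Strict Implicit. Unset Printing Implicit Defensive.
Import Order.TTheory GRing.Theory Num.Theory.
Local Open Scope ring_scope.

Definition unan (R : realFieldType) m : game R m :=
  fun S => if [set: 'I_m] \subset S then 1 else 0.

Lemma unan_mono (R : realFieldType) m : (0 < m)%N -> mono01_game (@unan R m).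
Proof.
move=> m0; split.
- rewrite /zero_normalized /unan; case: m m0 => // m _.
  case: ifP => //; move/subsetP => /(_ ord0 (in_setT _)); by rewrite inE.
- move=> S T ST; rewrite /unan; case: ifP => H.
    by rewrite (subset_trans H ST).
  by case: ifP.
- by move=> S; rewrite /unan; case: ifP; [right|left].
Qed.

Lemma shapley_unan (R : realFieldType) m (j : 'I_m) :
  shapley (@unan R m) j = 1 / (m%:R).
Proof.
rewrite /shapley (bigD1 [set~ j]); last by rewrite !inE eqxx.
rewrite /= big1 ?addr0; last first.
  move=> T /andP [jT TnC]; rewrite /unan.
  have -> : ([set: 'I_m] \subset T) = false.
    apply/negbTE; apply/negP => /subsetP /(_ j (in_setT _)); by rewrite (negbTE jT).
  have -> : ([set: 'I_m] \subset j |: T) = false.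
    apply/negbTE; apply/negP => H; move: TnC; rewrite eqEsubset; apply/negP.
    rewrite negbK; apply/andP; split; apply/subsetP => x; rewrite !inE.
      by move=> xT; apply/eqP => xj; move: jT; rewrite -xj xT.
    move=> xj; move/subsetP: H => /(_ x (in_setT _)); rewrite !inE.
    by rewrite (negbTE xj).
  by rewrite subrr mulr0.
have Hm : (0 < m)%N by case: m j => [[]|].
rewrite /unan.
have -> : [set: 'I_m] \subset j |: [set~ j].
  by apply/subsetP => x _; rewrite !inE; case: eqP.
have -> : ([set: 'I_m] \subset [set~ j]) = false.
  apply/negbTE; apply/negP => /subsetP /(_ j (in_setT _)); by rewrite !inE eqxx.
rewrite cardsC1 card_ord subr0 mulr1.
case: m j Hm => // n j _.
rewrite /=.
have -> : (n.+1 - n - 1 = 0)%N by rewrite subSnn.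
rewrite fact0 muln1 factS natrM.
have h1 : (n`!)%:R != 0 :> R by rewrite pnatr_eq0 -lt0n fact_gt0.
have h2 : (n.+1)%:R != 0 :> R by rewrite pnatr_eq0.
by rewrite invfM mulrCA mulfV // mulr1 div1r.
Qed.

Definition phi (x : 'I_3) : 'I_2 := if (x < 2)%N then ord0 else ord_max.

Theorem theorem1 (R : realFieldType) (M : mechanism R) :
  ~ (shapley_fair M /\ false_name_proof M).
Proof.
case=> SF FN.
have H := FN 2%N (@unan R 2) ord0 3%N phi (@unan R 3) (@unan_mono R 2 isT) (@unan_mono R 3 isT).
have : false_name_split (@unan R 2) ord0 phi (@unan R 3).
  split.
  - move=> j; case: j => [[|[|]]] //= Hj _.
    rewrite (_ : [set j' | phi j' == Ordinal Hj] = [set ord_max]) ?cards1 //.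
    apply/setP => x; rewrite !inE; case: x => [[|[|[|]]]] //= ?.
  - rewrite (_ : [set j' | phi j' == ord0] = [set ord0; Ordinal (isT : (1 < 3)%N)]) ?cards2 //.
    apply/setP => x; rewrite !inE; case: x => [[|[|[|]]]] //= ?.
  - move=> T; rewrite /unan.
    have -> : ([set: 'I_3] \subset phi @^-1: T) = ([set: 'I_2] \subset T).
      apply/idP/idP => /subsetP H1; apply/subsetP => x _.
        have : x = phi (if x == ord0 then ord0 else ord_max).
          by case: x => [[|[|]]] //= ? ; apply/val_inj.
        by move=> ->; have := H1 _ (in_setT (if x == ord0 then ord0 else ord_max)); rewrite inE.
      by rewrite inE; apply: H1; rewrite in_setT.
    by [].
move/H.
rewrite (SF 2%N _ (@unan_mono R 2 isT)).
rewrite (eq_bigr _ (fun j _ => SF 3%N _ (@unan_mono R 3 isT) j)).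
rewrite (eq_bigr (fun _ => 1 / 3%:R) (fun j _ => shapley_unan _ j)) shapley_unan.
rewrite big_mkcond !big_ord_recl big_ord0 /=.
move=> h.
have h6 : (6%:R:R) * (1 / 3%:R + (1 / 3%:R + (0 + 0))) <= 6%:R * (1 / 2%:R).
  by rewrite ler_pM2l ?ltr0n.
have e1 : (6%:R:R) * (1 / 3%:R + (1 / 3%:R + (0 + 0))) = 4%:R.
  by field.
have e2 : (6%:R:R) * (1 / 2%:R) = 3%:R.
  by field.
by move: h6; rewrite e1 e2 ler_nat.
Qed.
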